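(* The integer sequence $(PPL_t(n))_{n\geq 0}$ is $4$-regular.
   Context: The Thue-Morse word $t=t[1]t[2]\cdots=abbabaabbaababba\cdots$ is the fixed point starting with $a$ of the morphism $a\mapsto abba,\ b\mapsto baab$. A palindrome is a word $p=p[1]\cdots p[n]$ with $p[i]=p[n-i+1]$ for all $i$. $PPL_t(n)$ is the minimal number of nonempty palindromes whose concatenation equals the prefix of $t$ of length $n$, with $PPL_t(0)=0$. An integer sequence $(a(n))_{n\geq0}$ is called $k$-regular if there exist finitely many integer sequences $(a_1(n)),\ldots,(a_s(n))$ such that for every integer $i\geq 0$ and every $0\leq b<k^i$ there exist $c_1,\ldots,c_s\in\mathbb Z$ with $a(k^i n+b)=\sum_{j=1}^s c_j a_j(n)$ for all $n\geq 0$. *)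

(* Defs.v *)
From mathcomp Require Import all_boot all_order all_algebra.
From Stdlib Require Import ClassicalEpsilon.
Set Implicit Arguments. Unset Strict Implicit. Unset Printing Implicit Defensive.
Import GRing.Theory.

(* Letters: a = false, b = true. *)
Definition tm_morph (w : seq bool) : seq bool :=
  flatten [seq (if x then [:: true; false; false; true]
                else [:: false; true; true; false]) | x <- w].

(* mu^n(a); its length is 4^n, and mu^n(a) is a prefix of mu^(n+1)(a). *)
Definition tm_iter (n : nat) : seq bool := iter n tm_morph [:: false].

(* The prefix of length n of the Thue-Morse word t (fixed point of mu
   starting with a); since |mu^n(a)| = 4^n >= n, this is take n (mu^n(a)). *)
Definition tm_prefix (n : nat) : seq bool := take n (tm_iter n).

Definition palindrome (p : seq bool) : Prop := p = rev p.

Definition pal_fact (w : seq bool) (k : nat) : Prop :=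
  exists ps : seq (seq bool),
    size ps = k /\ (forall p, p \in ps -> p <> [::] /\ palindrome p)
    /\ flatten ps = w.

Definition pal_factb (w : seq bool) (k : nat) : bool :=
  if excluded_middle_informative (pal_fact w k) then true else false.

Lemma pal_fact_exists (w : seq bool) : exists k, pal_factb w k.
Proof.
exists (size w); rewrite /pal_factb.
case: excluded_middle_informative => // H; exfalso; apply: H.
exists [seq [:: x] | x <- w]; split; first by rewrite size_map.
split; last by elim: w => //= x w ->.
by move=> p /mapP [x _ ->].
Qed.

Definition PPL (w : seq bool) : nat := ex_minn (pal_fact_exists w).

Definition PPL_t (n : nat) : nat := PPL (tm_prefix n).

Definition k_regular (k : nat) (a : nat -> int) : Prop :=
  exists (s : nat) (as_ : 'I_s -> nat -> int),
    forall (i b : nat), (b < k ^ i)%N ->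
      exists c : 'I_s -> int,
        forall n : nat, a (k ^ i * n + b)%N = (\sum_(j < s) c j * as_ j n)%R.

(* Main.v *)
Require Import Defs.
From mathcomp Require Import all_boot all_order all_algebra.
From mathcomp Require Import zify.
From Stdlib Require Import ClassicalEpsilon.

Fixpoint tmf (k i : nat) : bool :=
  match k with
  | 0 => false
  | k'.+1 => if i == 0 then false else if odd i then ~~ tmf k' i./2 else tmf k' i./2
  end.
Definition tm (i : nat) := tmf i i.

Lemma tmf_eq k k' i : i <= k -> i <= k' -> tmf k i = tmf k' i.
Proof.
elim: k k' i => [|k IH] [|k'] i Hk Hk' //.
- by have -> : i = 0 by lia.
- by have -> : i = 0 by lia.
- rewrite /=; case: eqP => // Hi.
  by rewrite (IH k' i./2) //; lia.
Qed.

Lemma tmf_stable k i : i <= k -> tmf k i = tm i.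
Proof. by move=> H; rewrite /tm (@tmf_eq k i i). Qed.

Lemma tmfS k i : tmf k.+1 i =
  if i == 0 then false else if odd i then ~~ tmf k i./2 else tmf k i./2.
Proof. by []. Qed.

Lemma tm_unfold n : 0 < n -> tm n = if odd n then ~~ tm n./2 else tm n./2.
Proof.
case: n => [|n] // _.
rewrite {1}/tm tmfS.
have -> : (n.+1 == 0) = false by [].
by rewrite !tmf_stable //; lia.
Qed.

Lemma tm_even k : tm (2 * k) = tm k.
Proof.
case: k => [|k] //.
rewrite tm_unfold; last by lia.
have -> : odd (2 * k.+1) = false by rewrite oddM.
by have -> : (2 * k.+1)./2 = k.+1 by lia.
Qed.

Lemma tm_odd k : tm (2 * k + 1) = ~~ tm k.
Proof.
rewrite tm_unfold; last by lia.
have -> : odd (2 * k + 1) = true by rewrite oddD oddM.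
by have -> : (2 * k + 1)./2 = k by lia.
Qed.

Lemma tmA n a r : n = 4 * a + r -> r < 4 ->
  tm n = if (r == 1) || (r == 2) then ~~ tm a else tm a.
Proof.
move=> -> Hr.
case: r Hr => [|[|[|[|r]]]] // _ /=.
- by rewrite addn0 (_ : 4 * a = 2 * (2 * a)) ?tm_even //; lia.
- by rewrite (_ : 4 * a + 1 = 2 * (2 * a) + 1) ?tm_odd ?tm_even //; lia.
- by rewrite (_ : 4 * a + 2 = 2 * (2 * a + 1)) ?tm_even ?tm_odd //; lia.
- by rewrite (_ : 4 * a + 3 = 2 * (2 * a + 1) + 1) ?tm_odd ?tm_odd ?negbK //; lia.
Qed.

Definition blk (x : bool) := if x then [:: true; false; false; true]
                else [:: false; true; true; false].

Lemma tm_morph_cons x w : tm_morph (x :: w) = blk x ++ tm_morph w.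
Proof. by []. Qed.

Lemma size_tm_morph w : size (tm_morph w) = 4 * size w.
Proof. elim: w => [|x w IH] //=; rewrite size_cat IH; case: x => /=; lia. Qed.

Lemma nth_tm_morph w a r : a < size w -> r < 4 ->
  nth false (tm_morph w) (4 * a + r) =
  if (r == 1) || (r == 2) then ~~ nth false w a else nth false w a.
Proof.
elim: w a => [|x w IH] a Ha Hr //.
rewrite tm_morph_cons nth_cat.
case: a Ha => [|a] Ha.
  rewrite muln0 add0n (_ : r < size (blk x)) ?Hr //; last by clear Ha; case: x.
  by clear IH Ha; case: r Hr => [|[|[|[|r]]]] //; case: x.
rewrite (_ : 4 * a.+1 + r < size (blk x) = false); last by clear Ha; case: x => /=; lia.
rewrite (_ : 4 * a.+1 + r - size (blk x) = 4 * a + r); last by clear Ha; case: x => /=; lia.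
by apply: IH.
Qed.

Lemma tm_iter_spec k : size (tm_iter k) = 4 ^ k /\
  forall i, i < 4 ^ k -> nth false (tm_iter k) i = tm i.
Proof.
elim: k => [|k [Hs IH]].
  split => // i; rewrite expn0; case: i => //.
rewrite /tm_iter iterS -/(tm_iter k).
split; first by rewrite size_tm_morph Hs expnS.
move=> i Hi.
have Ha : i %/ 4 < size (tm_iter k) by rewrite Hs; rewrite expnS in Hi; lia.
have Hr : i %% 4 < 4 by lia.
rewrite {1}(_ : i = 4 * (i %/ 4) + i %% 4); last by lia.
rewrite nth_tm_morph // IH -?Hs //.
by rewrite (@tmA i (i %/ 4) (i %% 4)) //; lia.
Qed.

Lemma tm_prefixE n : tm_prefix n = mkseq tm n.
Proof.
have [Hs Hn] := tm_iter_spec n.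
have Hle : n <= 4 ^ n by apply: ltnW; apply: ltn_expl.
apply: (@eq_from_nth _ false).
  by rewrite size_takel ?size_mkseq ?Hs.
move=> i; rewrite size_takel ?Hs // => Hi.
by rewrite nth_take // nth_mkseq // Hn //; apply: leq_trans Hle.
Qed.

Definition palt j m := forall i, j <= i < m -> tm i = tm (j + m - 1 - i).
Definition p n := PPL_t n.

Lemma pal_factP w k : pal_factb w k = true <-> pal_fact w k.
Proof. by rewrite /pal_factb; case: excluded_middle_informative. Qed.

Lemma PPL_min w k : pal_fact w k -> PPL w <= k.
Proof. move=> H; rewrite /PPL; case: ex_minnP => m _ Hm; apply: Hm; exact/pal_factP. Qed.

Lemma PPL_fact w : pal_fact w (PPL w).
Proof. rewrite /PPL; case: ex_minnP => m Hm _; exact/pal_factP. Qed.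

Lemma take_mkseq' (f : nat -> bool) j m : j <= m -> take j (mkseq f m) = mkseq f j.
Proof.
move=> H; apply: (@eq_from_nth _ false); first by rewrite size_takel ?size_mkseq.
move=> i; rewrite size_takel ?size_mkseq // => Hi.
by rewrite nth_take // !nth_mkseq //; apply: leq_trans H.
Qed.

Lemma drop_mkseq' (f : nat -> bool) j m : drop j (mkseq f m) = mkseq (fun i => f (j + i)) (m - j).
Proof.
apply: (@eq_from_nth _ false); first by rewrite size_drop !size_mkseq.
move=> i; rewrite size_drop size_mkseq => Hi.
by rewrite nth_drop !nth_mkseq //; lia.
Qed.

Lemma palt_pal j m : j <= m -> palt j m -> palindrome (drop j (mkseq tm m)).
Proof.
move=> Hjm H; rewrite /palindrome drop_mkseq'.
apply: (@eq_from_nth _ false); first by rewrite size_rev.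
move=> i; rewrite size_mkseq => Hi.
rewrite nth_rev ?size_mkseq // !nth_mkseq //; last by lia.
by rewrite H; [congr tm; lia | lia].
Qed.

Lemma pal_palt j m : j <= m -> palindrome (drop j (mkseq tm m)) -> palt j m.
Proof.
move=> Hjm; rewrite /palindrome drop_mkseq' => H i Hi.
have Hi' : i - j < m - j by lia.
have := congr1 (nth false ^~ (i - j)) H.
rewrite nth_rev ?size_mkseq // !nth_mkseq //; last by lia.
by rewrite (_ : j + (i - j) = i); [move=> ->; congr tm; lia | lia].
Qed.

Lemma p0 : p 0 = 0.
Proof.
apply/eqP; rewrite -leqn0; apply: PPL_min.
by exists [::]; split => //; split.
Qed.

Lemma pD2 j m : j < m -> palt j m -> p m <= (p j).+1.
Proof.
move=> Hjm Hp.
have [ps [Hsz [Hps Hf]]] := PPL_fact (tm_prefix j).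
rewrite /p /PPL_t; apply: PPL_min.
exists (rcons ps (drop j (mkseq tm m))); split; first by rewrite size_rcons Hsz.
split.
  move=> q; rewrite mem_rcons in_cons => /orP [/eqP ->|/Hps //].
  split; last by apply: palt_pal => //; lia.
  move/(congr1 size); rewrite size_drop size_mkseq /=; lia.
rewrite flatten_rcons Hf !tm_prefixE -(@take_mkseq' tm j m (ltnW Hjm)).
exact: cat_take_drop.
Qed.

Lemma pD3 m : 0 < m -> exists j, [/\ j < m, palt j m & (p j).+1 <= p m].
Proof.
move=> Hm.
have [ps [Hsz [Hps Hf]]] := PPL_fact (tm_prefix m).
rewrite tm_prefixE in Hf.
case/lastP: ps Hsz Hps Hf => [|ps P] Hsz Hps Hf.
  by move/(congr1 size): Hf; rewrite size_mkseq /=; lia.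
rewrite flatten_rcons in Hf.
set j := size (flatten ps).
have Hsm : j + size P = m by rewrite /j -size_cat Hf size_mkseq.
have HPin : P \in rcons ps P by rewrite mem_rcons mem_head.
have [HP1 HP2] := Hps P HPin.
have HPs : 0 < size P by case: (P) HP1.
have Htake : take j (mkseq tm m) = flatten ps by rewrite -Hf take_size_cat.
have Hdrop : drop j (mkseq tm m) = P by rewrite -Hf drop_size_cat.
exists j; split; first by lia.
  by apply: pal_palt; [lia | rewrite Hdrop].
rewrite /p /PPL_t -/(PPL (tm_prefix m)) -Hsz size_rcons ltnS.
apply: PPL_min; exists ps; split => //; split.
  by move=> q Hq; apply: Hps; rewrite mem_rcons in_cons Hq orbT.
by rewrite tm_prefixE -Htake take_mkseq' //; lia.
Qed.

Lemma tmA0 x a : x = 4 * a -> tm x = tm a.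
Proof. by move=> E; rewrite (@tmA x a 0) //; lia. Qed.
Lemma tmA1 x a : x = 4 * a + 1 -> tm x = ~~ tm a.
Proof. by move=> E; rewrite (@tmA x a 1) //; lia. Qed.
Lemma tmA2 x a : x = 4 * a + 2 -> tm x = ~~ tm a.
Proof. by move=> E; rewrite (@tmA x a 2) //; lia. Qed.
Lemma tmA3 x a : x = 4 * a + 3 -> tm x = tm a.
Proof. by move=> E; rewrite (@tmA x a 3) //; lia. Qed.

Lemma pS n : p n.+1 <= (p n).+1.
Proof. by apply: pD2 => // i Hi; congr tm; lia. Qed.

Lemma palt_inner j m : palt j m -> palt j.+1 m.-1.
Proof. move=> H i Hi; rewrite H; [congr tm; lia | lia]. Qed.

Lemma pP n : p n <= (p n.+1).+1.
Proof.
have [j [Hj Hp Hl]] := @pD3 n.+1 (ltn0Sn n).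
have [E0|Hjn] : j = n \/ j < n by lia.
  by subst j; lia.
have H1 := pS j.
have [E|Hjn'] : j.+1 = n \/ j.+1 < n by lia.
  by subst n; lia.
have Hin : palt j.+1 n by have := @palt_inner _ _ Hp.
have := @pD2 _ _ Hjn' Hin; lia.
Qed.

Lemma p4 n : p (4 * n) <= p n.
Proof.
elim: n {-2}n (leqnn n) => [|N IH] n Hn.
  by have -> : n = 0 by lia.
case: n Hn => [|n] Hn; first by [].
have [j [Hj Hp Hl]] := @pD3 n.+1 (ltn0Sn n).
have Hp4 : palt (4 * j) (4 * n.+1).
  move=> i Hi.
  set a := i %/ 4.
  have Ha : j <= a < n.+1 by lia.
  have Hpa := Hp a Ha.
  have Hr : i %% 4 < 4 by lia.
  case Er: (i %% 4) Hr => [|[|[|[|r]]]] // _.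
  - rewrite (@tmA0 i a) ?(@tmA3 (4 * j + 4 * n.+1 - 1 - i) (j + n.+1 - 1 - a)) //; lia.
  - rewrite (@tmA1 i a) ?(@tmA2 (4 * j + 4 * n.+1 - 1 - i) (j + n.+1 - 1 - a)) ?Hpa //; lia.
  - rewrite (@tmA2 i a) ?(@tmA1 (4 * j + 4 * n.+1 - 1 - i) (j + n.+1 - 1 - a)) ?Hpa //; lia.
  - rewrite (@tmA3 i a) ?(@tmA0 (4 * j + 4 * n.+1 - 1 - i) (j + n.+1 - 1 - a)) //; lia.
have Hj4 : 4 * j < 4 * n.+1 by lia.
have := @pD2 _ _ Hj4 Hp4.
have := IH j (ltac:(lia)).
lia.
Qed.

Lemma pal_struct j m : j < m -> palt j m ->
  m = j.+1 \/ (m = j + 3 /\ (j %% 4 = 2 \/ j %% 4 = 3)) \/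
  (exists j' m', [/\ j = 4 * j', m = 4 * m', j' < m' & palt j' m']) \/
  (exists j' m', [/\ j = 4 * j'+1, m = 4 * m'+3, j' <= m' & palt j' m'.+1]) \/
  (exists j' m', [/\ j = 4 * j'+2, m = 4 * m'+2, j' < m' & palt j' m'.+1]) \/
  (exists j' m', [/\ j = 4 * j'+3, m = 4 * m'+1, j' < m' & palt j' m'.+1]).
Proof.
move=> Hjm H.
have [E1|Hm2] : m = j.+1 \/ j.+1 < m by lia.
  by left.
right.
have Hpar : (m - j) %% 2 < 2 by lia.
case Epar: ((m - j) %% 2) Hpar => [|[|k]] // _.
-
  right.
  set x := (j + m) %/ 2 - 1.
  have Ex := H x (ltac:(lia)).
  rewrite (_ : j + m - 1 - x = x.+1) in Ex; last by lia.
  have Hx : x %% 4 = 1 \/ x %% 4 = 3.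
    have Hr : x %% 4 < 4 by lia.
    case Er: (x %% 4) Hr => [|[|[|[|r]]]] _.
    + exfalso. rewrite (@tmA0 x (x %/ 4)) ?(@tmA1 x.+1 (x %/ 4)) in Ex; try lia.
      all: try by case: (tm _) Ex.
    + by left.
    + exfalso. rewrite (@tmA2 x (x %/ 4)) ?(@tmA3 x.+1 (x %/ 4)) in Ex; try lia.
      all: try by case: (tm _) Ex.
    + by right.
    + lia.
  have Hr : j %% 4 < 4 by lia.
  case Er: (j %% 4) Hr => [|[|[|[|r]]]] Hr'; last by lia.
  + left; exists (j %/ 4), (m %/ 4); split; try lia.
    move=> i Hi.
    have := H (4 * i) (ltac:(lia)).
    rewrite (@tmA0 (4 * i) i) ?(@tmA3 (j + m - 1 - 4 * i) (j %/ 4 + m %/ 4 - 1 - i)); try lia.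
    all: try by move=> ->.
  + right; left; exists (j %/ 4), (m %/ 4); split; try lia.
    move=> i Hi.
    have := H (4 * i + 1) (ltac:(lia)).
    rewrite (@tmA1 (4 * i + 1) i) ?(@tmA2 (j + m - 1 - (4 * i + 1)) (j %/ 4 + (m %/ 4).+1 - 1 - i)); try lia.
    all: try by move/negbLR; rewrite negbK => ->.
  + right; right; left; exists (j %/ 4), (m %/ 4); split; try lia.
    move=> i Hi.
    have [Hi1|Hi2] : i < m %/ 4 \/ i = m %/ 4 by lia.
      have := H (4 * i + 2) (ltac:(lia)).
      rewrite (@tmA2 (4 * i + 2) i) ?(@tmA1 (j + m - 1 - (4 * i + 2)) (j %/ 4 + (m %/ 4).+1 - 1 - i)); try lia.
      all: try by move/negbLR; rewrite negbK => ->.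
    have := H j (ltac:(lia)).
    rewrite (@tmA2 j (j %/ 4)) ?(@tmA1 (j + m - 1 - j) i); try lia.
    have -> : j %/ 4 + (m %/ 4).+1 - 1 - i = j %/ 4 by lia.
    all: try by move/negbLR; rewrite negbK => ->.
  + right; right; right; exists (j %/ 4), (m %/ 4); split; try lia.
    move=> i Hi.
    have [Hi1|Hi2] : i < m %/ 4 \/ i = m %/ 4 by lia.
      have := H (4 * i + 3) (ltac:(lia)).
      rewrite (@tmA3 (4 * i + 3) i) ?(@tmA0 (j + m - 1 - (4 * i + 3)) (j %/ 4 + (m %/ 4).+1 - 1 - i)); try lia.
      all: try by move=> ->.
    have := H j (ltac:(lia)).
    rewrite (@tmA3 j (j %/ 4)) ?(@tmA0 (j + m - 1 - j) i); try lia.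
    have -> : j %/ 4 + (m %/ 4).+1 - 1 - i = j %/ 4 by lia.
    all: try by move=> ->.
-
  have [E3|H5] : m = j + 3 \/ j + 5 <= m by lia.
  + left; split => //.
    have Ex := H j (ltac:(lia)).
    rewrite (_ : j + m - 1 - j = j + 2) in Ex; last by lia.
    have Hr : j %% 4 < 4 by lia.
    case Er: (j %% 4) Hr => [|[|[|[|r]]]] // _; [| |by left|by right].
    * rewrite (@tmA0 j (j %/ 4)) ?(@tmA2 (j + 2) (j %/ 4)) in Ex; try lia.
      all: try by case: (tm _) Ex.
    * rewrite (@tmA1 j (j %/ 4)) ?(@tmA3 (j + 2) (j %/ 4)) in Ex; try lia.
      all: try by case: (tm _) Ex.
  + exfalso.
    set x := (j + m - 1) %/ 2 - 2.
    have Ex0 := H x (ltac:(lia)).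
    have Ex1 := H x.+1 (ltac:(lia)).
    rewrite (_ : j + m - 1 - x = x + 4) in Ex0; last by lia.
    rewrite (_ : j + m - 1 - x.+1 = x + 3) in Ex1; last by lia.
    have Hr : x %% 4 < 4 by lia.
    set a := x %/ 4.
    case Er: (x %% 4) Hr => [|[|[|[|r]]]] Hr'; last by lia.
    * rewrite (@tmA1 x.+1 a) ?(@tmA3 (x + 3) a) in Ex1; try lia.
      all: try by case: (tm _) Ex1.
    * rewrite (@tmA1 x a) ?(@tmA1 (x + 4) a.+1) in Ex0; try lia.
      rewrite (@tmA2 x.+1 a) ?(@tmA0 (x + 3) a.+1) in Ex1; try lia.
      all: try by move: Ex0 Ex1; case: (tm a); case: (tm a.+1).
    * rewrite (@tmA2 x a) ?(@tmA2 (x + 4) a.+1) in Ex0; try lia.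
      rewrite (@tmA3 x.+1 a) ?(@tmA1 (x + 3) a.+1) in Ex1; try lia.
      all: try by move: Ex0 Ex1; case: (tm a); case: (tm a.+1).
    * rewrite (@tmA0 x.+1 a.+1) ?(@tmA2 (x + 3) a.+1) in Ex1; try lia.
      all: try by case: (tm _) Ex1.
Qed.

Definition fl m := let n := m %/ 4 in
  match m %% 4 with
  | 0 => p n | 1 => (p n).+1 | 2 => (minn (p n) (p n.+1)).+2 | _ => (p n.+1).+1 end.

Lemma fl0 x n : x = 4 * n -> fl x = p n.
Proof. move=> E; rewrite /fl (_ : x %% 4 = 0); [rewrite (_ : x %/ 4 = n) //; lia | lia]. Qed.
Lemma fl1 x n : x = 4 * n + 1 -> fl x = (p n).+1.
Proof. move=> E; rewrite /fl (_ : x %% 4 = 1); [rewrite (_ : x %/ 4 = n) //; lia | lia]. Qed.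
Lemma fl2 x n : x = 4 * n + 2 -> fl x = (minn (p n) (p n.+1)).+2.
Proof. move=> E; rewrite /fl (_ : x %% 4 = 2); [rewrite (_ : x %/ 4 = n) //; lia | lia]. Qed.
Lemma fl3 x n : x = 4 * n + 3 -> fl x = (p n.+1).+1.
Proof. move=> E; rewrite /fl (_ : x %% 4 = 3); [rewrite (_ : x %/ 4 = n) //; lia | lia]. Qed.

Lemma LB m : fl m <= p m.
Proof.
elim: m {-2}m (leqnn m) => [|N IH] m Hm.
  by have -> : m = 0 by lia.
have [->|Hm0] : m = 0 \/ 0 < m by lia.
  by [].
have [j [Hj Hp Hl]] := @pD3 m Hm0.
have IHj := IH j (ltac:(lia)).
suff : fl m <= (fl j).+1 by lia.
have HS := pS.
have [E|[[E3 Hr]|[[j' [m' [Ej Em Hjm' Hp']]]|[[j' [m' [Ej Em Hjm' Hp']]]|[[j' [m' [Ej Em Hjm' Hp']]]|[j' [m' [Ej Em Hjm' Hp']]]]]]]] := @pal_struct j m Hj Hp.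
- set a := j %/ 4.
  have Hr : j %% 4 < 4 by lia.
  case Er: (j %% 4) Hr => [|[|[|[|r]]]] Hr'; last by lia.
  + rewrite (@fl0 j a) ?(@fl1 m a); lia.
  + rewrite (@fl1 j a) ?(@fl2 m a); lia.
  + have := HS a.
    rewrite (@fl2 j a) ?(@fl3 m a); lia.
  + rewrite (@fl3 j a) ?(@fl0 m a.+1); lia.
- set a := j %/ 4.
  case: Hr => Hr.
  + have := HS a.
    rewrite (@fl2 j a) ?(@fl1 m a.+1); lia.
  + rewrite (@fl3 j a) ?(@fl2 m a.+1); lia.
- have := @pD2 _ _ Hjm' Hp'.
  rewrite (@fl0 j j') ?(@fl0 m m'); lia.
- have Hjm'' : j' < m'.+1 by lia.
  have := @pD2 _ _ Hjm'' Hp'.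
  rewrite (@fl1 j j') ?(@fl3 m m'); lia.
- have Hjm'' : j' < m'.+1 by lia.
  have := @pD2 _ _ Hjm'' Hp'.
  have : p m' <= (p j'.+1).+1.
    have [E|Hlt] : j'.+1 = m' \/ j'.+1 < m' by lia.
      by subst m'.
    have := @palt_inner _ _ Hp'.
    by move/(@pD2 _ _ Hlt).
  rewrite (@fl2 j j') ?(@fl2 m m'); lia.
- have : p m' <= (p j'.+1).+1.
    have [E|Hlt] : j'.+1 = m' \/ j'.+1 < m' by lia.
      by subst m'.
    have := @palt_inner _ _ Hp'.
    by move/(@pD2 _ _ Hlt).
  rewrite (@fl3 j j') ?(@fl1 m m'); lia.
Qed.

Lemma R0 n : p (4 * n) = p n.
Proof. have := LB (4 * n); rewrite (@fl0 _ n) //; have := p4 n; lia. Qed.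

Lemma R1 n : p (4 * n + 1) = (p n).+1.
Proof.
have := LB (4 * n + 1); rewrite (@fl1 _ n) //.
have := p4 n; have := pS (4 * n); rewrite addn1; lia.
Qed.

Lemma R3 n : p (4 * n + 3) = (p n.+1).+1.
Proof.
have := LB (4 * n + 3); rewrite (@fl3 _ n) //.
have := R0 n.+1; have := pP (4 * n + 3).
rewrite (_ : (4 * n + 3).+1 = 4 * n.+1); [lia|lia].
Qed.

Lemma R2 n : p (4 * n + 2) = (minn (p n) (p n.+1)).+2.
Proof.
have := LB (4 * n + 2); rewrite (@fl2 _ n) //.
set t := minn _ _.
have : t = p n \/ t = p n.+1 by rewrite /t /minn; case: ifP; auto.
have : t <= p n by exact: geq_minl.
have : t <= p n.+1 by exact: geq_minr.
clearbody t.
have := R1 n; have := R3 n; have := pS (4 * n + 1); have := pP (4 * n + 2).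
rewrite (_ : (4 * n + 1).+1 = 4 * n + 2); last by lia.
rewrite (_ : (4 * n + 2).+1 = 4 * n + 3); last by lia.
lia.
Qed.
Import GRing.Theory.
Local Open Scope ring_scope.

Arguments p : simpl never.

Definition G (k n : nat) : int :=
  match k with
  | 0 => (p n)%:Z | 1 => (p n.+1)%:Z | 2 => 1
  | 3 => (nat_of_bool (p n.+1 < p n)%N)%:Z
  | _ => (nat_of_bool (p n < p n.+1)%N)%:Z end.

Lemma sum5 (c : nat -> int) m :
  \sum_(l < 5) c l * G l m = c 0%N * G 0 m + c 1%N * G 1 m + c 2%N * G 2 m + c 3%N * G 3 m + c 4%N * G 4 m.
Proof. by rewrite !big_ord_recl big_ord0 /= addr0 !addrA. Qed.

Goal forall m, (nat_of_bool (p m.+1 < p m)%N)%:Z + 1 = 2 -> (p m.+1 < p m)%N.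
move=> m. lia.
Qed.

Definition Arow (b k : nat) : seq int :=
  match b, k with
  | 0, 0 => [:: 1; 0; 0; 0; 0] | 0, 1 => [:: 1; 0; 1; 0; 0]
  | 0, 2 => [:: 0; 0; 1; 0; 0] | 0, 3 => [:: 0; 0; 0; 0; 0]
  | 0, _ => [:: 0; 0; 1; 0; 0]
  | 1, 0 => [:: 1; 0; 1; 0; 0] | 1, 1 => [:: 1; 0; 2; -1; 0]
  | 1, 2 => [:: 0; 0; 1; 0; 0] | 1, 3 => [:: 0; 0; 0; 0; 0]
  | 1, _ => [:: 0; 0; 1; -1; 0]
  | 2, 0 => [:: 1; 0; 2; -1; 0] | 2, 1 => [:: 0; 1; 1; 0; 0]
  | 2, 2 => [:: 0; 0; 1; 0; 0] | 2, 3 => [:: 0; 0; 1; 0; -1]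
  | 2, _ => [:: 0; 0; 0; 0; 0]
  | _, 0 => [:: 0; 1; 1; 0; 0] | _, 1 => [:: 0; 1; 0; 0; 0]
  | _, 2 => [:: 0; 0; 1; 0; 0] | _, 3 => [:: 0; 0; 1; 0; 0]
  | _, _ => [:: 0; 0; 0; 0; 0]
  end.
Definition A b k l := nth 0 (Arow b k) l.

Lemma pd n : (p n.+1 <= (p n).+1 /\ p n <= (p n.+1).+1)%N.
Proof. split; [exact: pS | exact: pP]. Qed.

Lemma step b k m : (b < 4)%N -> (k < 5)%N ->
  G k (4 * m + b) = \sum_(l < 5) A b k l * G l m.
Proof.
move=> Hb Hk; rewrite sum5.
have e0 : p (4 * m + 0) = p m by rewrite addn0 R0.
have e1 := R1 m. have e2 := R2 m. have e3 := R3 m.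
have e4 : p (4 * m + 4) = p m.+1 by rewrite (_ : (4 * m + 4 = 4 * m.+1)%N) ?R0 //; lia.
have [d1 d2] := pd m.
move: e2; set t := minn _ _ => e2.
have : t = p m \/ t = p m.+1 by rewrite /t /minn; case: ifP; auto.
have : (t <= p m)%N by exact: geq_minl.
have : (t <= p m.+1)%N by exact: geq_minr.
clearbody t => h1 h2 h3.
rewrite /G.
case: b Hb => [|[|[|[|b]]]] // _; case: k Hk => [|[|[|[|[|k]]]]] // _;
  rewrite /A /= -?addnS ?e0 ?e1 ?e2 ?e3 ?e4; lia.
Qed.

Lemma kern i : forall b, (b < 4 ^ i)%N -> exists C : nat -> nat -> int,
  forall k n, (k < 5)%N -> G k (4 ^ i * n + b) = \sum_(l < 5) C k l * G l n.
Proof.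
elim: i => [|i IH] b Hb.
  have -> : b = 0%N by rewrite expn0 in Hb; lia.
  exists (fun k l => ((k == l) : nat)%:Z) => k n Hk.
  rewrite (sum5 (fun l => ((k == l) : nat)%:Z)) expn0 mul1n addn0.
  by case: k Hk => [|[|[|[|[|k]]]]] // _ /=; rewrite !mul0r !mul1r ?addr0 ?add0r.
have Hb1 : (b %/ 4 < 4 ^ i)%N by rewrite expnS in Hb; lia.
have [C HC] := IH _ Hb1.
exists (fun k l => \sum_(l' < 5) A (b %% 4) k l' * C l' l) => k n Hk.
rewrite (_ : (4 ^ i.+1 * n + b = 4 * (4 ^ i * n + b %/ 4) + b %% 4)%N); last first.
  rewrite expnS; lia.
rewrite step //; last by lia.
under eq_bigr => l _ do rewrite (HC l n (ltn_ord l)) mulr_sumr.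
rewrite exchange_big /=.
apply: eq_bigr => l _.
rewrite mulr_suml.
by apply: eq_bigr => l' _; rewrite mulrA.
Qed.

Local Close Scope ring_scope.

Theorem corollary17 : k_regular 4 (fun n => Posz (PPL_t n)).
Proof.
exists 5%N, (fun j n => G j n) => i b Hb.
have [C HC] := @kern i b Hb.
exists (fun j => C 0%N j) => n.
exact: (HC 0%N n).
Qed.
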